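(* Let $\alpha\in\mathbb{K}((t^{-1}))$ with $a_0(\alpha)=0$, and run the algorithm described in the context. Then: (1) All the partial quotients required by the algorithm exist, so $\beta$ and $\gamma$ are well defined, and $\alpha=\beta+\gamma$. Moreover, for every $n\ge1$: if $b_n$ is defined then $c_i=a_i(\alpha-[0;b_1,\dots,b_n])$ for every $1\le i\le n-1$; and if $c_n$ is defined then $b_i=a_i(\alpha-[0;c_1,\dots,c_n])$ and $c_i=a_i(\alpha-[0;b_1,\dots,b_n])$ for every $1\le i\le n$. (2) If $c_1$ is defined then $\deg c_1\ge 2\deg b_1+1$; and for every $n\ge2$, if $b_n$ is defined then $\deg b_n\ge\deg c_{n-1}+2$, and if $c_n$ is defined then $\deg c_n\ge \deg b_n+2$. (3) If $\alpha=p/q$ is a rational function ($p,q\in\mathbb{K}[t]$, $q\neq 0$), then the algorithm stops after at most $\deg(q)/2$ steps; in particular $\beta,\gamma\in\mathbb{K}(t)$.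
   Context: $\mathbb{K}((t^{-1}))$ is the field of formal Laurent series over a field $\mathbb{K}$, with $\deg\alpha=\sup\{-n:\alpha_n\ne0\}$ for $\alpha=\sum\alpha_nt^{-n}$. Every $\alpha$ has a unique continued fraction expansion $[a_0;a_1,a_2,\dots]$ with $a_n\in\mathbb{K}[t]$, $\deg a_n\ge1$ for $n\ge1$, finite iff $\alpha\in\mathbb{K}(t)$; $a_n(\alpha)$ denotes its $n$-th partial quotient. For polynomials $b_1,\dots,b_n$ of degree $\ge1$, $[0;b_1,\dots,b_n]$ is the finite continued fraction (equal to $0$ if $n=0$). Algorithm (Laurent analogue of Shulga's algorithm): given $\alpha$ with $a_0(\alpha)=0$, for $n=0,1,2,\dots$, with $b_1,\dots,b_n,c_1,\dots,c_n$ already defined: if $\alpha=[0;b_1,\dots,b_n]+[0;c_1,\dots,c_n]$, set $\beta=[0;b_1,\dots,b_n]$, $\gamma=[0;c_1,\dots,c_n]$ and stop. Otherwise set $b_{n+1}=a_{n+1}(\alpha-[0;c_1,\dots,c_n])$. If then $\alpha=[0;b_1,\dots,b_{n+1}]+[0;c_1,\dots,c_n]$, set $\beta=[0;b_1,\dots,b_{n+1}]$, $\gamma=[0;c_1,\dots,c_n]$ and stop. Otherwise set $c_{n+1}=a_{n+1}(\alpha-[0;b_1,\dots,b_{n+1}])$ and continue. If the algorithm never stops, set $\beta=[0;b_1,b_2,\dots]$ and $\gamma=[0;c_1,c_2,\dots]$. *)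

(* Defs.v *)
From HB Require Import structures.
From mathcomp Require Import all_boot all_order all_algebra.
From Stdlib Require Import ClassicalEpsilon.

Set Implicit Arguments.
Unset Strict Implicit.
Unset Printing Implicit Defensive.

Import Order.TTheory GRing.Theory Num.Theory.
Local Open Scope ring_scope.

Section Laurent.
Variable K : fieldType.

(* A Laurent series is represented by its coefficient function:
   f n is the coefficient of t^n.  Elements of K((t^{-1})) are those
   functions whose support is bounded above. *)
Definition lseries := int -> K.

Definition is_laurent (f : lseries) : Prop :=
  exists N : int, forall n : int, N < n -> f n = 0.

(* some upper bound of the support (any valid one, chosen classically) *)
Definition lbound (f : lseries) : int :=
  ClassicalEpsilon.epsilon (inhabits 0)
    (fun N : int => forall n : int, N < n -> f n = 0).

Definition lzero : lseries := fun _ => 0.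
Definition lone : lseries := fun n => if n == 0 then 1 else 0.
Definition ladd (f g : lseries) : lseries := fun n => f n + g n.
Definition lopp (f : lseries) : lseries := fun n => - f n.
Definition lsub (f g : lseries) : lseries := ladd f (lopp g).

(* Cauchy product: (fg)_n = sum_{i+j=n} f_i g_j; the index i ranges over
   the window [n - lbound g, n - lbound g + |lbound f + lbound g - n + 1|),
   which contains every i with f_i g_{n-i} <> 0. *)
Definition lmul (f g : lseries) : lseries := fun n =>
  \sum_(k < absz (lbound f + lbound g - n + 1))
     f (n - lbound g + k%:Z) * g (lbound g - k%:Z).

(* multiplicative inverse in K((t^{-1})) (0 if it does not exist) *)
Definition linv (f : lseries) : lseries :=
  match excluded_middle_informative
          (exists g : lseries, is_laurent g /\ lmul f g = lone) with
  | left H => proj1_sig (constructive_indefinite_description _ H)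
  | right _ => lzero
  end.

Definition lpoly (p : {poly K}) : lseries := fun n =>
  match n with Posz m => p`_m | Negz _ => 0 end.

Definition lpolypart (f : lseries) : {poly K} :=
  \poly_(i < (absz (lbound f)).+1) f (Posz i).

Fixpoint cq (f : lseries) (n : nat) : option lseries :=
  match n with
  | 0 => Some f
  | n'.+1 =>
      match cq f n' with
      | None => None
      | Some x =>
          let r := lsub x (lpoly (lpolypart x)) in
          if excluded_middle_informative (r = lzero) then None
          else Some (linv r)
      end
  end.

(* a_n(f): the n-th partial quotient, None if the expansion is shorter *)
Definition pq (f : lseries) (n : nat) : option {poly K} :=
  omap lpolypart (cq f n).

Definition cf0 (bs : seq {poly K}) : lseries :=
  foldr (fun b x => linv (ladd (lpoly b) x)) lzero bs.

Definition pdeg (p : {poly K}) : nat := (size p).-1.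

Definition lconv (u : nat -> lseries) (l : lseries) : Prop :=
  forall m : int, exists N : nat, forall n : nat, (N <= n)%N ->
    forall k : int, m <= k -> u n k = l k.

Definition is_ratfun (f : lseries) : Prop :=
  exists p q : {poly K}, q != 0 /\ f = lmul (lpoly p) (linv (lpoly q)).

(* state after some iterations: the lists (b_1..b_k), (c_1..c_l) built so far,
   and whether the algorithm is still running, has stopped, or failed
   (a required partial quotient did not exist). *)
Inductive alg_st :=
| Run of seq {poly K} & seq {poly K}
| Stop of seq {poly K} & seq {poly K}
| Fail of seq {poly K} & seq {poly K}.

Definition st_b (s : alg_st) : seq {poly K} :=
  match s with Run bs _ | Stop bs _ | Fail bs _ => bs end.
Definition st_c (s : alg_st) : seq {poly K} :=
  match s with Run _ cs | Stop _ cs | Fail _ cs => cs end.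
Definition is_stop (s : alg_st) : bool :=
  if s is Stop _ _ then true else false.

(* iteration number n = size bs = size cs of the algorithm *)
Definition alg_step (alpha : lseries) (s : alg_st) : alg_st :=
  match s with
  | Run bs cs =>
      let n := size bs in
      if excluded_middle_informative (alpha = ladd (cf0 bs) (cf0 cs))
      then Stop bs cs
      else match pq (lsub alpha (cf0 cs)) n.+1 with
           | None => Fail bs cs
           | Some b =>
               let bs' := rcons bs b in
               if excluded_middle_informative (alpha = ladd (cf0 bs') (cf0 cs))
               then Stop bs' cs
               else match pq (lsub alpha (cf0 bs')) n.+1 with
                    | None => Fail bs' cs
                    | Some c => Run bs' (rcons cs c)
                    end
           end
  | _ => s
  end.

Definition alg_state (alpha : lseries) (n : nat) : alg_st :=
  iter n (alg_step alpha) (Run [::] [::]).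

Definition alg_b (alpha : lseries) (n : nat) : option {poly K} :=
  let bs := st_b (alg_state alpha n) in
  if (0 < n <= size bs)%N then Some (nth 0 bs n.-1) else None.
Definition alg_c (alpha : lseries) (n : nat) : option {poly K} :=
  let cs := st_c (alg_state alpha n) in
  if (0 < n <= size cs)%N then Some (nth 0 cs n.-1) else None.

Definition alg_bs (alpha : lseries) (n : nat) : seq {poly K} :=
  take n (st_b (alg_state alpha n)).
Definition alg_cs (alpha : lseries) (n : nat) : seq {poly K} :=
  take n (st_c (alg_state alpha n)).

Definition alg_result (alpha beta gamma : lseries) : Prop :=
  (exists n bs cs, alg_state alpha n = Stop bs cs /\
                   beta = cf0 bs /\ gamma = cf0 cs)
  \/ ((forall n, exists bs cs, alg_state alpha n = Run bs cs) /\
      lconv (fun n => cf0 (alg_bs alpha n)) beta /\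
      lconv (fun n => cf0 (alg_cs alpha n)) gamma).

End Laurent.

(* Main.v *)
Require Import Defs.
From HB Require Import structures.
From mathcomp Require Import all_boot all_order all_algebra.
From mathcomp Require Import zify ring lra.
From mathcomp Require boolp.
From Stdlib Require Import Classical ClassicalEpsilon FunctionalExtensionality ProofIrrelevance.
Set Implicit Arguments. Unset Strict Implicit. Unset Printing Implicit Defensive.
Import Order.TTheory GRing.Theory Num.Theory.
Local Open Scope ring_scope.

Section P1.
Variable K : fieldType.
Implicit Types f g h : lseries K.

Definition bnd f (N : int) := forall n : int, N < n -> f n = 0.

Lemma lboundP f : is_laurent f -> bnd f (lbound f).
Proof.
move=> H; rewrite /lbound.
exact: (epsilon_spec (inhabits 0) (fun N : int => forall n : int, N < n -> f n = 0) H).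
Qed.

Lemma bnd_le f N M : bnd f N -> N <= M -> bnd f M.
Proof. move=> H le n lt; apply: H; lia. Qed.

Definition csum (lo : int) (M : nat) (F : int -> K) := \sum_(k < M) F (lo + k%:Z).

Lemma csum_sub (F : int -> K) (lo : int) (M : nat) (lo' : int) (M' : nat) : lo' <= lo -> lo + M%:Z <= lo' + M'%:Z ->
  (forall i, lo' <= i < lo' + M'%:Z -> ~~ (lo <= i < lo + M%:Z) -> F i = 0) ->
  csum lo M F = csum lo' M' F.
Proof.
move=> h1 h2 hv.
pose s := absz (lo - lo'). pose r := absz (lo' + M'%:Z - (lo + M%:Z))%R.
have hs : lo = lo' + s%:Z by rewrite /s; lia.
have hM : M' = (s + M + r)%N by rewrite /s /r; lia.
rewrite /csum hM; symmetry.
rewrite -(big_mkord xpredT (fun k => F (lo' + k%:Z))) -(big_mkord xpredT (fun k => F (lo + k%:Z))).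
rewrite (big_cat_nat _ (n := (s + M)%N)) ?leq_addr //=.
rewrite (big_cat_nat _ (n := s) (m := 0%N)) ?leq_addr //=.
rewrite [X in X + _ + _ = _]big1_seq; last first.
  move=> k /andP[_]; rewrite mem_index_iota => /andP[_ hk].
  apply: hv; lia.
rewrite [X in _ + _ + X = _]big1_seq; last first.
  move=> k /andP[_]; rewrite mem_index_iota => /andP[hk1 hk2].
  apply: hv; lia.
rewrite add0r addr0.
rewrite -{1}(add0n s) big_addn.
rewrite addKn.
apply: eq_bigr => k _; congr F; rewrite hs; lia.
Qed.

Lemma csum_eq (F : int -> K) (lo : int) (M : nat) (lo' : int) (M' : nat) :
  (forall i, F i != 0 -> (lo <= i < lo + M%:Z) /\ (lo' <= i < lo' + M'%:Z)) ->
  csum lo M F = csum lo' M' F.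
Proof.
move=> H.
pose lo2 := Order.min lo lo'.
pose hi2 := Order.max (lo + M%:Z) (lo' + M'%:Z).
pose M2 := absz (hi2 - lo2)%R.
have e1 : hi2 = lo2 + M2%:Z.
  rewrite /M2 /hi2 /lo2; case: (leP lo lo'); case: (leP (lo + M%:Z) (lo' + M'%:Z)); lia.
have hv : forall lo0 M0, (forall i, F i != 0 -> lo0 <= i < lo0 + M0%:Z) ->
   forall i, lo2 <= i < lo2 + M2%:Z -> ~~ (lo0 <= i < lo0 + M0%:Z) -> F i = 0.
  move=> lo0 M0 h i _ hn; apply/eqP; apply: contraNT hn => /h //.
rewrite (@csum_sub F lo M lo2 M2); first last.
- apply: hv => i /H [] //.
- rewrite -e1 /hi2; case: (leP (lo + M%:Z) (lo' + M'%:Z)); lia.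
- rewrite /lo2; case: (leP lo lo'); lia.
rewrite (@csum_sub F lo' M' lo2 M2) //; first last.
- apply: hv => i /H [] //.
- rewrite -e1 /hi2; case: (leP (lo + M%:Z) (lo' + M'%:Z)); lia.
- rewrite /lo2; case: (leP lo lo'); lia.
Qed.

Lemma lmulE f g (lo : int) (M : nat) (n : int) : is_laurent f -> is_laurent g ->
  (forall i, f i * g (n - i) != 0 -> lo <= i < lo + M%:Z) ->
  lmul f g n = csum lo M (fun i => f i * g (n - i)).
Proof.
move=> Lf Lg H.
have bf := lboundP Lf; have bg := lboundP Lg.
have -> : lmul f g n = csum (n - lbound g) (absz (lbound f + lbound g - n + 1)%R)
          (fun i => f i * g (n - i)).
  rewrite /lmul /csum; apply: eq_bigr => k _; congr (_ * g _); lia.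
apply: csum_eq => i hi; split; last exact: H.
have fi : f i != 0 by apply: contraNneq hi => ->; rewrite mul0r.
have gi : g (n - i) != 0 by apply: contraNneq hi => ->; rewrite mulr0.
have h1 : i <= lbound f by rewrite leNgt; apply/negP => /bf; apply/eqP.
have h2 : n - i <= lbound g by rewrite leNgt; apply/negP => /bg; apply/eqP.
lia.
Qed.

End P1.

Section P2.
Variable K : fieldType.
Implicit Types f g h : lseries K.

Lemma lmulW f g (Nf Ng : int) (lo : int) (M : nat) (n : int) :
  bnd f Nf -> bnd g Ng -> lo <= n - Ng -> Nf < lo + M%:Z ->
  lmul f g n = csum lo M (fun i => f i * g (n - i)).
Proof.
move=> bf bg h1 h2; apply: lmulE.
- by exists Nf.
- by exists Ng.
move=> i hi.
have fi : f i != 0 by apply: contraNneq hi => ->; rewrite mul0r.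
have gi : g (n - i) != 0 by apply: contraNneq hi => ->; rewrite mulr0.
have e1 : i <= Nf by rewrite leNgt; apply/negP => /bf; apply/eqP.
have e2 : n - i <= Ng by rewrite leNgt; apply/negP => /bg; apply/eqP.
lia.
Qed.

Lemma lmul_bnd f g (Nf Ng : int) : bnd f Nf -> bnd g Ng -> bnd (lmul f g) (Nf + Ng).
Proof.
move=> bf bg n hn.
rewrite (@lmulW f g Nf Ng (n - Ng) 0 n) //; last lia.
by rewrite /csum big_ord0.
Qed.

Lemma laurent_bnd f : is_laurent f <-> exists N, bnd f N.
Proof. by []. Qed.

Lemma lmul_laurent f g : is_laurent f -> is_laurent g -> is_laurent (lmul f g).
Proof. move=> [Nf bf] [Ng bg]; exists (Nf + Ng); exact: lmul_bnd. Qed.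

Lemma ladd_bnd f g N : bnd f N -> bnd g N -> bnd (ladd f g) N.
Proof. by move=> bf bg n hn; rewrite /ladd bf ?bg ?addr0. Qed.

Lemma ladd_laurent f g : is_laurent f -> is_laurent g -> is_laurent (ladd f g).
Proof.
move=> [Nf bf] [Ng bg]; exists (Order.max Nf Ng).
apply: ladd_bnd; [apply: (bnd_le bf)|apply: (bnd_le bg)]; rewrite ?le_max ?lexx ?orbT //.
Qed.

Lemma lopp_laurent f : is_laurent f -> is_laurent (lopp f).
Proof. by move=> [N bf]; exists N => n hn; rewrite /lopp bf ?oppr0. Qed.

Lemma lzero_laurent : is_laurent (lzero K).
Proof. by exists 0. Qed.

Lemma lone_laurent : is_laurent (lone K).
Proof. by exists 0 => n hn; rewrite /lone; case: eqP => // e; move: hn; rewrite e ltxx. Qed.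

Lemma linv_laurent f : is_laurent (linv f).
Proof.
rewrite /linv; case: excluded_middle_informative => [H|_]; last exact: lzero_laurent.
by case: (constructive_indefinite_description _ H) => g [].
Qed.

Lemma lpoly_bnd (p : {poly K}) : bnd (lpoly p) (Posz (size p)).
Proof. by case=> // m hm; rewrite /lpoly nth_default //; move: hm; rewrite ltz_nat => /ltnW. Qed.

Lemma lpoly_laurent (p : {poly K}) : is_laurent (lpoly p).
Proof. by exists (Posz (size p)); exact: lpoly_bnd. Qed.

Lemma csumD (lo : int) (M : nat) (F G : int -> K) :
  csum lo M (fun i => F i + G i) = csum lo M F + csum lo M G.
Proof. by rewrite /csum big_split. Qed.

Lemma csum_rev (lo c : int) (M : nat) (F : int -> K) :
  csum lo M (fun i => F (c - i)) = csum (c - (lo + M%:Z) + 1) M F.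
Proof.
rewrite /csum (reindex_inj rev_ord_inj) /=; apply: eq_bigr => k _.
congr F; have := ltn_ord k; lia.
Qed.

Lemma lmulC f g : is_laurent f -> is_laurent g -> lmul f g = lmul g f.
Proof.
move=> [Nf bf] [Ng bg]; apply: functional_extensionality => n.
pose M := (absz (Nf + Ng - n)%R + 1)%N.
rewrite (@lmulW f g Nf Ng (n - Ng) M n) //; last by rewrite /M; lia.
rewrite (@lmulW g f Ng Nf (n - (n - Ng + M%:Z) + 1) M n) //; try by rewrite /M; lia.
rewrite -csum_rev /csum; apply: eq_bigr => k _; rewrite mulrC; congr (_ * _); congr f; lia.
Qed.

Lemma lmulDl f g h : is_laurent f -> is_laurent g -> is_laurent h ->
  lmul (ladd f g) h = ladd (lmul f h) (lmul g h).
Proof.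
move=> [Nf bf] [Ng bg] [Nh bh]; apply: functional_extensionality => n.
pose N := Order.max Nf Ng.
have bf' : bnd f N by apply: (bnd_le bf); rewrite le_max lexx.
have bg' : bnd g N by apply: (bnd_le bg); rewrite le_max lexx orbT.
pose M := (absz (N + Nh - n)%R + 1)%N.
rewrite /ladd (@lmulW _ h N Nh (n - Nh) M n) //; last 2 first.
- exact: ladd_bnd.
- by rewrite /M; lia.
rewrite (@lmulW f h N Nh (n - Nh) M n) //; last by rewrite /M; lia.
rewrite (@lmulW g h N Nh (n - Nh) M n) //; last by rewrite /M; lia.
rewrite -csumD; rewrite /csum; apply: eq_bigr => k _; rewrite mulrDl.
done.
Qed.

Lemma lmul1 f : is_laurent f -> lmul (lone K) f = f.
Proof.
move=> Lf; apply: functional_extensionality => n.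
have L1 := lone_laurent.
rewrite (@lmulE _ (lone K) f 0 1 n) //.
  by rewrite /csum big_ord1 /= /lone add0r eqxx mul1r subr0.
move=> i; rewrite /lone; have [->|_] := eqVneq i 0; first by lia.
by rewrite mul0r eqxx.
Qed.

Lemma lmulA f g h : is_laurent f -> is_laurent g -> is_laurent h ->
  lmul f (lmul g h) = lmul (lmul f g) h.
Proof.
move=> [Nf bf] [Ng bg] [Nh bh]; apply: functional_extensionality => n.
pose loI := n - Nh. pose MI := (absz (Nf + Ng - loI)%R + 1)%N.
pose loJ := loI - Ng. pose MJ := (absz (Nf - loJ)%R + 1)%N.
have bgh := lmul_bnd bg bh. have bfg := lmul_bnd bf bg.
have c1 : loJ <= n - (Ng + Nh) by rewrite /loJ /loI; lia.
have c2 : Nf < loJ + MJ%:Z by rewrite /MJ /loJ /loI; lia.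
have c3 : loI <= n - Nh by rewrite /loI; lia.
have c4 : Nf + Ng < loI + MI%:Z by rewrite /MI /loI; lia.
rewrite (lmulW bf bgh c1 c2) (lmulW bfg bh c3 c4) /csum.
under [in RHS]eq_bigr => k _.
  have c5 : loJ <= (loI + k%:Z) - Ng by rewrite /loJ /loI; lia.
  rewrite (lmulW bf bg c5 c2) /csum mulr_suml.
  over.
rewrite /= exchange_big /=; apply: eq_bigr => l _.
have [f0|fn0] := eqVneq (f (loJ + l%:Z)) 0.
  by rewrite f0 mul0r big1 // => k _; rewrite !mul0r.
have jle : loJ + l%:Z <= Nf.
  by rewrite leNgt; apply/negP => /bf; apply/eqP.
have c6 : loI - (loJ + l%:Z) <= n - (loJ + l%:Z) - Nh by rewrite /loI; lia.
have c7 : Ng < loI - (loJ + l%:Z) + MI%:Z by rewrite /MI /loI /loJ in jle *; lia.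
rewrite (lmulW bg bh c6 c7) /csum mulr_sumr; apply: eq_bigr => k _.
rewrite -mulrA; congr (_ * (_ * _)); [congr g|congr h]; lia.
Qed.

End P2.

Section P3.
Variable K : fieldType.

Record lau := Lau { lval : lseries K; lvalP : is_laurent lval }.

Lemma lval_inj : injective lval.
Proof.
move=> [f Pf] [g Pg] /= e; move: Pf Pg; rewrite e => Pf Pg.
by rewrite (proof_irrelevance _ Pf Pg).
Qed.

HB.instance Definition _ := boolp.gen_eqMixin lau.
HB.instance Definition _ := boolp.gen_choiceMixin lau.

Definition lau0 := Lau (@lzero_laurent K).
Definition lau1 := Lau (@lone_laurent K).
Definition lauadd (x y : lau) := Lau (ladd_laurent (lvalP x) (lvalP y)).
Definition lauopp (x : lau) := Lau (lopp_laurent (lvalP x)).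
Definition laumul (x y : lau) := Lau (lmul_laurent (lvalP x) (lvalP y)).

Lemma lauaddA : associative lauadd.
Proof. by move=> x y z; apply: lval_inj; apply: functional_extensionality => n; rewrite /= /ladd addrA. Qed.
Lemma lauaddC : commutative lauadd.
Proof. by move=> x y; apply: lval_inj; apply: functional_extensionality => n; rewrite /= /ladd addrC. Qed.
Lemma lauadd0 : left_id lau0 lauadd.
Proof. by move=> x; apply: lval_inj; apply: functional_extensionality => n; rewrite /= /ladd /lzero add0r. Qed.
Lemma lauaddN : left_inverse lau0 lauopp lauadd.
Proof. by move=> x; apply: lval_inj; apply: functional_extensionality => n; rewrite /= /ladd /lopp /lzero addNr. Qed.

HB.instance Definition _ := GRing.isZmodule.Build lau lauaddA lauaddC lauadd0 lauaddN.

Lemma laumulA : associative laumul.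
Proof. by move=> x y z; apply: lval_inj; rewrite /= lmulA //; apply: lvalP. Qed.
Lemma laumulC : commutative laumul.
Proof. by move=> x y; apply: lval_inj; rewrite /= lmulC //; apply: lvalP. Qed.
Lemma laumul1 : left_id lau1 laumul.
Proof. by move=> x; apply: lval_inj; rewrite /= lmul1 //; apply: lvalP. Qed.
Lemma laumulDl : left_distributive laumul lauadd.
Proof. by move=> x y z; apply: lval_inj; rewrite /= lmulDl //; apply: lvalP. Qed.
Lemma lau1_neq0 : lau1 != lau0.
Proof.
apply/eqP => /(congr1 (fun x => lval x 0)) /=; rewrite /lone /lzero eqxx.
by move/eqP; rewrite oner_eq0.
Qed.

HB.instance Definition _ := GRing.Zmodule_isComNzRing.Build lau laumulA laumulC laumul1 laumulDl lau1_neq0.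

Definition lco (x : lau) (n : int) : K := lval x n.

Lemma lau_eqP (x y : lau) : (forall n, lco x n = lco y n) -> x = y.
Proof. by move=> H; apply: lval_inj; apply: functional_extensionality. Qed.

Lemma lcoD x y n : lco (x + y) n = lco x n + lco y n. Proof. by []. Qed.
Lemma lcoN x n : lco (- x) n = - lco x n. Proof. by []. Qed.
Lemma lcoB x y n : lco (x - y) n = lco x n - lco y n. Proof. by []. Qed.
Lemma lco0 n : lco 0 n = 0. Proof. by []. Qed.
Lemma lco1 n : lco 1 n = if n == 0 then 1 else 0. Proof. by []. Qed.
Lemma lvalM (x y : lau) : lval (x * y) = lmul (lval x) (lval y). Proof. by []. Qed.
Lemma lvalD (x y : lau) : lval (x + y) = ladd (lval x) (lval y). Proof. by []. Qed.
Lemma lvalB (x y : lau) : lval (x - y) = lsub (lval x) (lval y). Proof. by []. Qed.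
Lemma lval0 : lval 0 = lzero K. Proof. by []. Qed.
Lemma lval1 : lval 1 = lone K. Proof. by []. Qed.

Definition lbnd (x : lau) (N : int) := bnd (lval x) N.

Lemma lbnd_ex x : exists N, lbnd x N.
Proof. exact: lvalP. Qed.

Lemma lbnd_le x N M : lbnd x N -> N <= M -> lbnd x M.
Proof. exact: bnd_le. Qed.

Lemma lbndM x y N M : lbnd x N -> lbnd y M -> lbnd (x * y) (N + M).
Proof. exact: lmul_bnd. Qed.

Lemma lbndD x y N : lbnd x N -> lbnd y N -> lbnd (x + y) N.
Proof. exact: ladd_bnd. Qed.

Lemma lbndN x N : lbnd x N -> lbnd (- x) N.
Proof. by move=> h n hn; rewrite /= /lopp h ?oppr0. Qed.

Lemma lbndB x y N : lbnd x N -> lbnd y N -> lbnd (x - y) N.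
Proof. by move=> h1 h2; apply: lbndD => //; apply: lbndN. Qed.

Lemma lbnd0 N : lbnd 0 N. Proof. by []. Qed.

Lemma lbnd1 : lbnd 1 0.
Proof. by move=> n hn; rewrite /= /lone; case: eqP => // e; move: hn; rewrite e ltxx. Qed.

Lemma lbndX x N j : lbnd x N -> lbnd (x ^+ j) (N * j%:Z).
Proof.
move=> h; elim: j => [|j IH]; first by rewrite mulr0 expr0; exact: lbnd1.
rewrite exprS; have -> : N * j.+1%:Z = N + N * j%:Z by lia.
exact: lbndM.
Qed.

Lemma lbnd_lco x N n : lbnd x N -> N < n -> lco x n = 0.
Proof. by move=> h; apply: h. Qed.

Lemma lcoM_local (f g g' : lau) (Nf : int) (n : int) : lbnd f Nf ->
  (forall k, n - Nf <= k -> lco g k = lco g' k) -> lco (f * g) n = lco (f * g') n.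
Proof.
move=> bf H.
have [Ng bg] := lbnd_ex g; have [Ng' bg'] := lbnd_ex g'.
pose N := Order.max Ng Ng'.
have bg1 : lbnd g N by apply: (lbnd_le bg); rewrite le_max lexx.
have bg2 : lbnd g' N by apply: (lbnd_le bg'); rewrite le_max lexx orbT.
pose M := (absz (Nf + N - n)%R + 1)%N.
have c1 : n - N <= n - N by [].
have c2 : Nf < n - N + M%:Z by rewrite /M; lia.
rewrite /lco !lvalM (lmulW bf bg1 c1 c2) (lmulW bf bg2 c1 c2) /csum.
apply: eq_bigr => k _.
have [f0|fn0] := eqVneq (lval f (n - N + k%:Z)) 0; first by rewrite f0 !mul0r.
have hle : n - N + k%:Z <= Nf by rewrite leNgt; apply/negP => /bf; apply/eqP.
congr (_ * _); apply: H; lia.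
Qed.

Definition lmono (a : int) (c : K) : lseries K := fun n => if n == a then c else 0.
Lemma lmono_laurent a c : is_laurent (lmono a c).
Proof. by exists a => n hn; rewrite /lmono; case: eqP => // e; move: hn; rewrite e ltxx. Qed.
Definition mono a c := Lau (lmono_laurent a c).

Lemma lco_mono_mul a c (x : lau) n : lco (mono a c * x) n = c * lco x (n - a).
Proof.
rewrite /lco lvalM (@lmulE _ _ _ a 1 n); [|exact: lvalP|exact: lvalP|].
  by rewrite /csum big_ord1 /= addr0 /lmono eqxx.
by move=> i; rewrite /= /lmono; have [->|_] := eqVneq i a; [lia|rewrite mul0r eqxx].
Qed.

End P3.

Section P4.
Variable K : fieldType.
Local Notation lau := (lau K).
Implicit Types x y z : lau.

Definition hasdeg x (d : int) := lco x d != 0 /\ lbnd x d.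

Lemma hasdeg_le x a b : hasdeg x a -> lbnd x b -> a <= b.
Proof. by move=> [h _] hb; rewrite leNgt; apply/negP => /hb; apply/eqP. Qed.

Lemma hasdeg_uniq x a b : hasdeg x a -> hasdeg x b -> a = b.
Proof.
move=> ha hb; apply/eqP; rewrite eq_le (hasdeg_le ha) ?(hasdeg_le hb) //.
by case: ha. by case: hb.
Qed.

Lemma hasdeg_neq0 x a : hasdeg x a -> x != 0.
Proof. by move=> [h _]; apply: contraNneq h => ->. Qed.

Lemma deg_exists x : x != 0 -> exists d, hasdeg x d.
Proof.
move=> xn0.
have [k0 hk0] : exists k0, lco x k0 != 0.
  apply: NNPP => H; move/eqP: xn0; apply; apply: lau_eqP => n.
  rewrite lco0; case: (eqVneq (lco x n) 0) => // hn; exfalso; apply: H; by exists n.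
have [N bN] := lbnd_ex x.
have k0N : k0 <= N by rewrite leNgt; apply/negP => /bN; apply/eqP.
pose P j := lco x (N - j%:Z) != 0.
have exP : exists j, P j by exists (absz (N - k0)%R); rewrite /P; have -> : N - (absz (N - k0)%R)%:Z = k0 by lia.
case: (ex_minnP exP) => j0 Pj0 minj.
exists (N - j0%:Z); split => // n hn.
have [nN|nN] := ltP N n; first exact: bN.
have : ~~ P (absz (N - n)%R).
  apply/negP => /minj; lia.
rewrite /P negbK; have -> : N - (absz (N - n)%R)%:Z = n by lia.
by move/eqP.
Qed.

Lemma degM x y a b : hasdeg x a -> hasdeg y b -> hasdeg (x * y) (a + b).
Proof.
move=> [ha ba] [hb bb]; split; last exact: lbndM.
have c1 : a <= a + b - b by lia.
have c2 : a < a + (1%N)%:Z by lia.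
rewrite /lco lvalM (lmulW ba bb c1 c2) /csum big_ord1 /= addr0.
by rewrite mulf_neq0 // (_ : a + b - a = b) //; lia.
Qed.

Lemma degD x y a : hasdeg x a -> lbnd y (a - 1) -> hasdeg (x + y) a.
Proof.
move=> [ha ba] hy; split.
  by rewrite lcoD (lbnd_lco hy) ?addr0 //; lia.
apply: lbndD => //; apply: (lbnd_le hy); lia.
Qed.

Lemma lbnd_sum (I : Type) (r : seq I) (P : pred I) (F : I -> lau) N :
  (forall i, P i -> lbnd (F i) N) -> lbnd (\sum_(i <- r | P i) F i) N.
Proof.
move=> H; apply: (big_ind (fun z => lbnd z N)); [exact: lbnd0|by move=> u v; apply: lbndD|exact: H].
Qed.

Lemma inv_exists x : x != 0 -> exists y, x * y = 1.
Proof.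
move=> /deg_exists [d [hd bd]].
pose c := lco x d.
pose m := @mono K (- d) c^-1.
pose u := 1 - m * x.
have bu : lbnd u (-1).
  move=> n hn; rewrite -/(lco u n) lcoB lco_mono_mul lco1.
  have [->|n0] := eqVneq n 0.
    by rewrite sub0r opprK mulVf // subrr.
  rewrite (lbnd_lco bd (n := n - - d)); last lia.
  by rewrite mulr0 subr0.
pose S M := \sum_(j < M) u ^+ j.
have buj : forall j, lbnd (u ^+ j) (- j%:Z).
  by move=> j; have := lbndX (j:=j) bu; rewrite (_ : -1 * j%:Z = - j%:Z) //; lia.
have stab : forall M M' k, (M <= M')%N -> - M%:Z < k -> lco (S M') k = lco (S M) k.
  move=> M M' k le hk.
  rewrite /S -!(big_mkord xpredT (fun j => u ^+ j)) (big_cat_nat _ (n := M)) //.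
  rewrite lcoD.
  have -> : lco (\sum_(M <= i < M') u ^+ i) k = 0.
    apply: (lbnd_lco (N := - M%:Z)); last lia.
    rewrite big_seq; apply: lbnd_sum => j; rewrite mem_index_iota; case/andP => h1 _.
    apply: (lbnd_le (buj j)); lia.
  by rewrite addr0.
have stab2 : forall M k, - M%:Z < k -> lco (S M) k = lco (S (absz k).+1) k.
  move=> M k hk; have [le|le] := leqP M (absz k).+1.
    by rewrite (stab M) //.
  by rewrite (stab (absz k).+1 M) //; [apply: ltnW|lia].
have bS : forall M, lbnd (S M) 0.
  move=> M; apply: lbnd_sum => j _; apply: (lbnd_le (buj j)); lia.
pose G : lseries K := fun k => lco (S (absz k).+1) k.
have LG : is_laurent G by exists 0 => k hk; apply: bS.
pose g := Lau LG.
have e1 : (1 - u) * g = 1.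
  apply: lau_eqP => n.
  have b1u : lbnd (1 - u) 0 by apply: lbndB; [exact: lbnd1|apply: (lbnd_le bu)].
  rewrite (@lcoM_local _ _ _ (S (absz n).+1) 0 n b1u); last first.
    by move=> k hk; rewrite /lco /= /G -/(lco _ k) -(stab2 (absz n).+1) //; lia.
  have -> : (1 - u) * S (absz n).+1 = 1 - u ^+ (absz n).+1.
    by rewrite /S -opprB mulNr -subrX1 opprB.
  rewrite lcoB (@lbnd_lco _ (u ^+ (absz n).+1) (- ((absz n).+1)%:Z)) ?subr0 //; lia.
exists (m * g); rewrite mulrA (mulrC x) -e1 /u; congr (_ * _); ring.
Qed.

End P4.

Section P5a.
Variable K : fieldType.

Lemma linv_spec (f : lseries K) : (exists g, is_laurent g /\ lmul f g = lone K) ->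
  lmul f (linv f) = lone K.
Proof.
move=> H; rewrite /linv; case: excluded_middle_informative => // H'.
by case: (constructive_indefinite_description _ H') => g [].
Qed.

Lemma linv0 : linv (lzero K) = lzero K.
Proof.
rewrite /linv; case: excluded_middle_informative => // -[g [Lg e]].
exfalso; have := congr1 (fun f => f 0) e; rewrite /lone eqxx.
have L0 := @lzero_laurent K.
rewrite (@lmulE _ _ _ 0 0 0) //; first by rewrite /csum big_ord0 => /eqP; rewrite eq_sym oner_eq0.
by move=> i; rewrite /lzero mul0r eqxx.
Qed.

Definition lauinv (x : lau K) := Lau (linv_laurent (lval x)).

Lemma lau_mulVf (x : lau K) : x != 0 -> lauinv x * x = 1.
Proof.
move=> /inv_exists [y e]; rewrite mulrC; apply: lval_inj; rewrite lvalM /=.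
apply: linv_spec; exists (lval y); split; first exact: lvalP.
by rewrite -lvalM e.
Qed.

Lemma lau_inv0 : lauinv 0 = 0.
Proof. by apply: lval_inj; rewrite /= linv0. Qed.

HB.instance Definition _ := GRing.ComNzRing_isField.Build (lau K) lau_mulVf lau_inv0.

End P5a.

Section P5.
Variable K : fieldType.
Local Notation lau := (lau K).
Implicit Types x y z : lau.

Lemma lvalV x : lval (x^-1) = linv (lval x). Proof. by []. Qed.

Definition polyL (p : {poly K}) : lau := Lau (lpoly_laurent p).

Lemma lco_poly p (m : nat) : lco (polyL p) (Posz m) = p`_m. Proof. by []. Qed.
Lemma lco_polyN p (m : nat) : lco (polyL p) (Negz m) = 0. Proof. by []. Qed.

Lemma polyLD p q : polyL (p + q) = polyL p + polyL q.
Proof. apply: lau_eqP => -[m|m]; rewrite lcoD; [by rewrite !lco_poly coefD|by rewrite !lco_polyN addr0]. Qed.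
Lemma polyLN p : polyL (- p) = - polyL p.
Proof. apply: lau_eqP => -[m|m]; rewrite lcoN; [by rewrite !lco_poly coefN|by rewrite !lco_polyN oppr0]. Qed.
Lemma polyLB p q : polyL (p - q) = polyL p - polyL q.
Proof. by rewrite polyLD polyLN. Qed.
Lemma polyL0 : polyL 0 = 0.
Proof. apply: lau_eqP => -[m|m]; rewrite lco0; [by rewrite lco_poly coef0|by rewrite lco_polyN]. Qed.
Lemma polyL1 : polyL 1 = 1.
Proof.
apply: lau_eqP => -[m|m]; rewrite lco1; [rewrite lco_poly coef1; by case: m|by rewrite lco_polyN].
Qed.

Lemma polyLM p q : polyL (p * q) = polyL p * polyL q.
Proof.
have Lp := lpoly_laurent p; have Lq := lpoly_laurent q.
apply: lau_eqP => -[m|m].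
  rewrite lco_poly coefM /lco lvalM (@lmulE _ _ _ 0 m.+1 m) //.
    rewrite /csum; apply: eq_bigr => k _; have hk := ltn_ord k; rewrite add0r subzn //.
  move=> [i|i] /=; last by rewrite mul0r eqxx.
  case: (leqP i m) => hi; first lia.
  by rewrite (_ : Posz m - Posz i = Negz (i - m).-1) ?mulr0 ?eqxx //; lia.
rewrite lco_polyN /lco lvalM (@lmulE _ _ _ 0 0 (Negz m)) //; first by rewrite /csum big_ord0.
move=> [i|i] /=; last by rewrite mul0r eqxx.
by rewrite (_ : Negz m - Posz i = Negz (m + i)) ?mulr0 ?eqxx //; lia.
Qed.

Definition pdegz (p : {poly K}) : int := Posz (pdeg p).

Lemma lbnd_poly p : lbnd (polyL p) (pdegz p).
Proof.
move=> [m|m] hm //; rewrite -/(lco _ _) lco_poly nth_default //.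
move: hm; rewrite /pdegz /pdeg ltz_nat; case: (size p) => //= s; lia.
Qed.

Lemma hasdeg_poly p : p != 0 -> hasdeg (polyL p) (pdegz p).
Proof.
move=> pn0; split; last exact: lbnd_poly.
by rewrite /pdegz lco_poly /pdeg -lead_coefE lead_coef_eq0.
Qed.

Lemma polyL_small_eq0 p : lbnd (polyL p) (-1) -> p = 0.
Proof.
move=> h; apply/polyP => m; rewrite coef0 -lco_poly; apply: h; lia.
Qed.

Lemma polyL_inj p q : polyL p = polyL q -> p = q.
Proof.
move=> e; apply/eqP; rewrite -subr_eq0; apply/eqP; apply: polyL_small_eq0.
by rewrite polyLB e subrr; exact: lbnd0.
Qed.

Definition pp x : {poly K} := lpolypart (lval x).
Definition small x := lbnd x (-1).

Lemma pp_spec x : small (x - polyL (pp x)).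
Proof.
move=> [m|m] hm //; rewrite -/(lco _ _) lcoB lco_poly /pp /lpolypart coef_poly.
case: ifP => hlt; first by rewrite subrr.
have Lx := lvalP x.
rewrite subr0 /lco; apply: (lboundP Lx); move: hlt; rewrite ltnS => /negbT; rewrite -ltnNge => h.
lia.
Qed.

Lemma pp_uniq x p : small (x - polyL p) -> pp x = p.
Proof.
move=> h; apply/eqP; rewrite -subr_eq0; apply/eqP.
apply: polyL_small_eq0; rewrite polyLB.
have -> : polyL (pp x) - polyL p = (x - polyL p) - (x - polyL (pp x)) by ring.
apply: lbndB => //; exact: pp_spec.
Qed.

Lemma pp_small x : small x -> pp x = 0.
Proof. by move=> h; apply: pp_uniq; rewrite polyL0 subr0. Qed.

Lemma smallD x y : small x -> small y -> small (x + y). Proof. exact: lbndD. Qed.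
Lemma smallB x y : small x -> small y -> small (x - y). Proof. exact: lbndB. Qed.
Lemma small0 : small 0. Proof. exact: lbnd0. Qed.

Lemma pp_polyD p s : small s -> pp (polyL p + s) = p.
Proof. move=> h; apply: pp_uniq; by rewrite (_ : polyL p + s - polyL p = s) //; ring. Qed.

Lemma pp_deg x (d : nat) : hasdeg x (Posz d) -> pp x != 0 /\ pdeg (pp x) = d.
Proof.
move=> hx.
have hs := pp_spec x.
have ex : x = polyL (pp x) + (x - polyL (pp x)) by ring.
have [e|ne] := eqVneq (pp x) 0.
  exfalso; move: hx hs; rewrite e polyL0 subr0 => hx hs.
  by have := hasdeg_le hx hs; lia.
split => //.
have h2 : hasdeg x (pdegz (pp x)).
  rewrite {1}ex; apply: degD; first exact: hasdeg_poly.
  by apply: (lbnd_le hs); rewrite /pdegz; lia.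
by have := hasdeg_uniq hx h2; rewrite /pdegz => -[].
Qed.

End P5.

Section P6.
Variable K : fieldType.
Local Notation lau := (lau K).
Implicit Types x y z : lau.

Lemma hasdeg1 : hasdeg (1 : lau) 0.
Proof. by split; [rewrite lco1 eqxx oner_eq0|exact: lbnd1]. Qed.

Lemma hasdegV x a : hasdeg x a -> hasdeg x^-1 (- a).
Proof.
move=> hx; have xn0 := hasdeg_neq0 hx.
have [b hb] := deg_exists (invr_neq0 xn0).
have := degM hx hb; rewrite mulfV // => h1.
by have := hasdeg_uniq h1 hasdeg1 => e; rewrite (_ : - a = b) //; lia.
Qed.

Lemma hasdegN x a : hasdeg x a -> hasdeg (- x) a.
Proof. by move=> [h b]; split; [rewrite lcoN oppr_eq0|exact: lbndN]. Qed.

Lemma hasdeg_lbnd x a b : hasdeg x a -> a <= b -> lbnd x b.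
Proof. by move=> [_ h] le; apply: (lbnd_le h). Qed.

Lemma small_deg x : small x -> x != 0 -> exists2 d, hasdeg x d & d < 0.
Proof. by move=> s /deg_exists [d hd]; exists d => //; have := hasdeg_le hd s; lia. Qed.

Lemma hasdeg_small x d : hasdeg x d -> d < 0 -> small x.
Proof. by move=> h lt; apply: (hasdeg_lbnd h); lia. Qed.

Fixpoint cqL x (n : nat) : option lau :=
  match n with
  | 0 => Some x
  | n'.+1 => match cqL x n' with
             | None => None
             | Some y => if y - polyL (pp y) == 0 then None else Some ((y - polyL (pp y))^-1)
             end
  end.

Definition pqL x n := omap (@pp K) (cqL x n).

Definition cf0L (bs : seq {poly K}) : lau := foldr (fun b x => (polyL b + x)^-1) 0 bs.

Lemma cq_val x n : cq (lval x) n = omap (@lval K) (cqL x n).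
Proof.
elim: n => [|n IH] //=; rewrite IH; case: (cqL x n) => [y|] //=.
case: excluded_middle_informative => e; case: eqP => e' //.
- by exfalso; apply: e'; apply: lval_inj; exact: e.
- by exfalso; apply: e; exact: (congr1 (@lval K) e').
Qed.

Lemma pq_val x n : pq (lval x) n = pqL x n.
Proof. by rewrite /pq /pqL cq_val; case: (cqL x n). Qed.

Lemma cf0_val bs : cf0 bs = lval (cf0L bs).
Proof. by elim: bs => [|b bs IH] //=; rewrite IH. Qed.

Lemma cqL_shift x n : cqL x n.+1 = match cqL x 1 with Some y => cqL y n | None => None end.
Proof.
elim: n => [|n IH]; first by case: (cqL x 1).
have -> : cqL x n.+2 = match cqL x n.+1 with
             | None => None
             | Some y => if y - polyL (pp y) == 0 then None else Some ((y - polyL (pp y))^-1)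
             end by [].
rewrite IH; case: (cqL x 1) => // y.
Qed.

Lemma cqL_eq1 x y n : cqL x 1 = cqL y 1 -> cqL x n.+1 = cqL y n.+1.
Proof. by move=> e; rewrite cqL_shift e -cqL_shift. Qed.

Lemma cqL1 x : cqL x 1 = if x - polyL (pp x) == 0 then None else Some ((x - polyL (pp x))^-1).
Proof. by []. Qed.

Lemma cqL1_small x : small x -> cqL x 1 = if x == 0 then None else Some x^-1.
Proof. by move=> s; rewrite cqL1 pp_small // polyL0 subr0. Qed.

Lemma pqL0 x : pqL x 0 = Some (pp x). Proof. by []. Qed.

Lemma cqL_deg x n y : cqL x n.+1 = Some y -> exists2 d : nat, hasdeg y (Posz d) & (0 < d)%N.
Proof.
rewrite /=; case: (cqL x n) => // z; case: eqP => // ne [<-].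
have [d hd dlt] := small_deg (pp_spec z) (introN eqP ne).
have := hasdegV hd; case: d hd dlt => // m _ _ h; exists m.+1 => //.
Qed.

Lemma pqL_deg x n a : pqL x n.+1 = Some a -> (0 < pdeg a)%N.
Proof.
rewrite /pqL; case e: (cqL x n.+1) => [y|] //= [<-].
have [d hd dp] := cqL_deg e; have [_ ->] := pp_deg hd; done.
Qed.

End P6.

Section P7.
Variable K : fieldType.
Local Notation lau := (lau K).
Implicit Types x y z : lau.
Implicit Types (a b : {poly K}) (bs : seq {poly K}).

Definition Dsum (bs : seq {poly K}) : nat := sumn (map (@pdeg K) bs).
Definition pref y (bs : seq {poly K}) :=
  forall i, (i < size bs)%N -> pqL y i.+1 = Some (nth 0 bs i).
Definition alldeg (bs : seq {poly K}) := all (fun b => 0 < pdeg b)%N bs.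

Lemma cf0L_cons b bs : cf0L (b :: bs) = (polyL b + cf0L bs)^-1.
Proof. by []. Qed.

Lemma pdeg_neq0 (b : {poly K}) : (0 < pdeg b)%N -> b != 0.
Proof. by apply: contraTneq => ->; rewrite /pdeg size_poly0. Qed.

Lemma deg_poly_small b r : (0 < pdeg b)%N -> small r -> hasdeg (polyL b + r) (pdegz b).
Proof.
move=> hb hr; apply: degD; first exact/hasdeg_poly/pdeg_neq0.
by apply: (lbnd_le hr); rewrite /pdegz; lia.
Qed.

Lemma cf0L_props bs : alldeg bs -> small (cf0L bs) /\
  (forall b bs', bs = b :: bs' -> hasdeg (cf0L bs) (- pdegz b)).
Proof.
elim: bs => [|b bs IH]; first by split => //; exact: small0.
case/andP => hb /IH [sr _].
have h : hasdeg (cf0L (b :: bs)) (- pdegz b) by apply: hasdegV; exact: deg_poly_small.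
split; last by move=> b0 bs0 [<- _].
by apply: (hasdeg_small h); rewrite /pdegz; lia.
Qed.

Lemma cf0L_small bs : alldeg bs -> small (cf0L bs).
Proof. by case/cf0L_props. Qed.

Lemma head_step y n : small y -> y != 0 ->
  cqL y 1 = Some y^-1 /\ cqL y n.+2 = cqL (y^-1 - polyL (pp y^-1)) n.+1.
Proof.
move=> sy yn0; have c1 : cqL y 1 = Some y^-1 by rewrite cqL1_small // (negbTE yn0).
split => //; rewrite cqL_shift c1; apply: cqL_eq1.
by rewrite cqL1 [RHS]cqL1_small //; exact: pp_spec.
Qed.

Lemma pqL1_neq0 y a : small y -> pqL y 1 = Some a -> y != 0.
Proof. by move=> sy; rewrite /pqL cqL1_small //; case: eqP. Qed.

Lemma pref_cons y b bs : small y -> pref y (b :: bs) ->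
  [/\ y != 0, b = pp y^-1 & pref (y^-1 - polyL (pp y^-1)) bs].
Proof.
move=> sy hp; have h0 := hp 0%N erefl.
have yn0 := pqL1_neq0 sy h0.
have [c1 c2] := head_step 0 sy yn0.
split => //.
  by move: h0; rewrite /pqL c1 => -[].
move=> i hi; have := hp i.+1 hi; rewrite /pqL.
by have [_ ->] := head_step i sy yn0.
Qed.

Lemma fwd_some y bs a : small y -> pref y bs -> pqL y (size bs).+1 = Some a ->
  hasdeg (y - cf0L bs) (- (2 * Dsum bs + pdeg a)%N%:Z).
Proof.
elim: bs y a => [|b bs IH] y a sy.
  move=> _ h; have yn0 := pqL1_neq0 sy h.
  move: h; rewrite /pqL cqL1_small // (negbTE yn0) => -[<-].
  have [d hd dlt] := small_deg sy yn0.
  have := hasdegV hd; case: d hd dlt => // m hd _ hv.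
  have [_ e] := pp_deg hv.
  by rewrite subr0 /Dsum /= e; rewrite (_ : - (2 * 0 + m.+1)%N%:Z = Negz m) //; lia.
move=> hp ha.
have [yn0 eb hp'] := pref_cons sy hp.
set y' := y^-1 - polyL (pp y^-1) in hp'.
have sy' : small y' by exact: pp_spec.
have ha' : pqL y' (size bs).+1 = Some a.
  by move: ha; rewrite /pqL (_ : (size (b :: bs)).+1 = (size bs).+2) //; have [_ ->] := head_step (size bs) sy yn0.
have IHh := IH y' a sy' hp' ha'.
have hb : (0 < pdeg b)%N by apply: (@pqL_deg _ y 0); exact: (hp 0%N erefl).
have alb : alldeg bs.
  apply/allP => c /(nthP 0) [i hi <-]; apply: (@pqL_deg _ y' i); exact: hp'.
have sr := cf0L_small alb.
set r := cf0L bs in IHh sr *.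
have ey : y = (polyL b + y')^-1 by rewrite /y' -eb addrC subrK invrK.
have d1 := deg_poly_small hb sy'.
have d2 := deg_poly_small hb sr.
have n1 := hasdeg_neq0 d1; have n2 := hasdeg_neq0 d2.
have -> : y - cf0L (b :: bs) = (r - y') * (polyL b + y')^-1 * (polyL b + r)^-1.
  rewrite ey cf0L_cons -/r; field; by rewrite n1 n2.
have := degM (degM (hasdegN IHh) (hasdegV d1)) (hasdegV d2).
rewrite opprB (_ : _ + _ + _ = - (2 * Dsum (b :: bs) + pdeg a)%N%:Z) //.
by rewrite /Dsum /= -/(Dsum bs) /pdegz; lia.
Qed.

Lemma fwd_none y bs : small y -> pref y bs -> pqL y (size bs).+1 = None -> y = cf0L bs.
Proof.
elim: bs y => [|b bs IH] y sy.
  move=> _; rewrite /pqL cqL1_small //; case: eqP => // -> _; done.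
move=> hp ha.
have [yn0 eb hp'] := pref_cons sy hp.
set y' := y^-1 - polyL (pp y^-1) in hp'.
have sy' : small y' by exact: pp_spec.
have ha' : pqL y' (size bs).+1 = None.
  by move: ha; rewrite /pqL (_ : (size (b :: bs)).+1 = (size bs).+2) //; have [_ ->] := head_step (size bs) sy yn0.
have := IH y' sy' hp' ha' => e.
by rewrite cf0L_cons -e /y' -eb addrC subrK invrK.
Qed.

Lemma fwd_bnd y bs : small y -> pref y bs -> lbnd (y - cf0L bs) (- (2 * Dsum bs)%N%:Z - 1).
Proof.
move=> sy hp; case ha: (pqL y (size bs).+1) => [a|].
  have := fwd_some sy hp ha => h; apply: (hasdeg_lbnd h).
  have := pqL_deg ha; lia.
by rewrite (fwd_none sy hp ha) subrr; exact: lbnd0.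
Qed.

Lemma bwd y bs : small y -> alldeg bs -> lbnd (y - cf0L bs) (- (2 * Dsum bs)%N%:Z - 1) -> pref y bs.
Proof.
elim: bs y => [|b bs IH] y sy; first by move=> _ _ i.
case/andP => hb alb hl.
have [sr _] := cf0L_props alb.
set r := cf0L bs in sr.
set c := cf0L (b :: bs) in hl.
have ab : alldeg (b :: bs) by rewrite /alldeg /= hb.
have dc : hasdeg c (- pdegz b) by have [_ h] := cf0L_props ab; exact: h.
have Db : (pdeg b <= Dsum (b :: bs))%N by rewrite /Dsum /=; lia.
have dy : hasdeg y (- pdegz b).
  rewrite (_ : y = c + (y - c)); last by ring.
  apply: degD => //; apply: (lbnd_le hl); rewrite /pdegz; lia.
have yn0 := hasdeg_neq0 dy.
have cn0 := hasdeg_neq0 dc.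
pose z := y^-1.
have dz : hasdeg z (pdegz b) by have := hasdegV dy; rewrite opprK.
have ez : z - (polyL b + r) = - (y - c) * y^-1 * c^-1.
  rewrite /z (_ : polyL b + r = c^-1); last by rewrite /c cf0L_cons invrK.
  field; by rewrite yn0 cn0.
have hl2 : lbnd (z - (polyL b + r)) (- (2 * Dsum bs)%N%:Z - 1).
  rewrite ez; apply: (lbnd_le (lbndM (lbndM (lbndN hl) (hasdeg_lbnd dz (lexx _)))
      (hasdeg_lbnd (hasdegV dc) (lexx _)))).
  rewrite /Dsum /= -/(Dsum bs) /pdegz; lia.
have sz' : small (z - polyL b).
  rewrite (_ : z - polyL b = r + (z - (polyL b + r))); last by ring.
  apply: smallD => //; apply: (lbnd_le hl2); lia.
have eb : pp z = b := pp_uniq sz'.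
have hp' : pref (z - polyL (pp z)) bs.
  apply: IH; [by rewrite (pp_uniq sz')|done|rewrite (pp_uniq sz')].
  by rewrite (_ : z - polyL b - r = z - (polyL b + r)) //; ring.
move=> [|i] hi.
  by rewrite /pqL; have [-> _] := head_step 0 sy yn0; rewrite /= -/z eb.
by rewrite /pqL; have [_ ->] := head_step i sy yn0; apply: hp'.
Qed.

Lemma pref_cf0 bs : alldeg bs -> pref (cf0L bs) bs.
Proof. move=> h; apply: bwd => //; first exact: cf0L_small. by rewrite subrr; exact: lbnd0. Qed.

Lemma pref_rcons y bs b : pref y bs -> pqL y (size bs).+1 = Some b -> pref y (rcons bs b).
Proof.
move=> hp hb i; rewrite size_rcons ltnS leq_eqVlt => /orP[/eqP ->|hi].
  by rewrite nth_rcons ltnn eqxx.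
by rewrite nth_rcons hi; apply: hp.
Qed.

Lemma pref_take y bs n : pref y bs -> pref y (take n bs).
Proof.
move=> hp i; rewrite size_take => hi.
have hi' : (i < n)%N by move: hi; case: (ltnP n (size bs)) => h hi; lia.
have hi2 : (i < size bs)%N by move: hi; case: (ltnP n (size bs)) => h hi; lia.
by rewrite nth_take //; apply: hp.
Qed.

Lemma pref_alldeg y bs : pref y bs -> alldeg bs.
Proof. by move=> hp; apply/allP => c /(nthP 0) [i hi <-]; apply: (@pqL_deg _ y i); apply: hp. Qed.

Lemma Dsum_rcons bs b : Dsum (rcons bs b) = (Dsum bs + pdeg b)%N.
Proof. by rewrite /Dsum map_rcons -cats1 sumn_cat /= addn0. Qed.

Lemma Dsum_size bs : alldeg bs -> (size bs <= Dsum bs)%N.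
Proof. by elim: bs => //= b bs IH /andP[h1 h2]; rewrite /Dsum /= -/(Dsum bs); have := IH h2; lia. Qed.

End P7.

Section P8.
Variable K : fieldType.
Local Notation lau := (lau K).
Implicit Types x y z : lau.
Implicit Types (a b c : {poly K}) (B C : seq {poly K}).
Variable A : lau.
Hypothesis ppA : pp A = 0.

Lemma sA : small A.
Proof. by have := pp_spec A; rewrite ppA polyL0 subr0. Qed.

Definition stepL B C : alg_st K :=
  if A == cf0L B + cf0L C then Stop B C else
  match pqL (A - cf0L C) (size B).+1 with
  | None => Fail B C
  | Some b =>
      if A == cf0L (rcons B b) + cf0L C then Stop (rcons B b) C else
      match pqL (A - cf0L (rcons B b)) (size B).+1 with
      | None => Fail (rcons B b) C
      | Some c => Run (rcons B b) (rcons C c)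
      end
  end.

Lemma eq_lval x y : (lval x = lval y) <-> x = y.
Proof. by split => [/lval_inj|->]. Qed.

Lemma step_eq B C : alg_step (lval A) (Run B C) = stepL B C.
Proof.
rewrite /alg_step /stepL.
have e1 : forall X Y, (lval A = ladd (cf0 X) (cf0 Y)) <-> (A = cf0L X + cf0L Y).
  by move=> X Y; rewrite !cf0_val -lvalD eq_lval.
case: excluded_middle_informative => /= h1.
  by have -> : A == cf0L B + cf0L C by apply/eqP; apply/e1.
have -> : (A == cf0L B + cf0L C) = false by apply/negbTE/eqP => /e1.
rewrite cf0_val -lvalB pq_val; case: (pqL _ _) => [b|] //.
case: excluded_middle_informative => /= h2.
  by have -> : A == cf0L (rcons B b) + cf0L C by apply/eqP; apply/e1; move: h2; rewrite !cf0_val.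
have -> : (A == cf0L (rcons B b) + cf0L C) = false by apply/negbTE/eqP => /e1; move: h2; rewrite !cf0_val => h2 h; exact: h2 h.
by rewrite cf0_val -lvalB pq_val.
Qed.

Record RI n B C : Prop := RIb {
  ri_sB : size B = n; ri_sC : size C = n;
  ri_pC : pref (A - cf0L C) B; ri_pB : pref (A - cf0L B) C;
  ri_D : (Dsum B <= Dsum C)%N;
  ri_J : (0 < n)%N -> (pdeg (last 0%R C) + 1 <= 2 * (Dsum C - Dsum B))%N;
  ri_E : (2 * n <= Dsum C - Dsum B)%N }.

Lemma RI0 : RI 0 [::] [::].
Proof. by split => //; move=> i. Qed.

Definition out_stop1 B C := A = cf0L B + cf0L C /\ stepL B C = Stop B C.
Definition out_stop2 n B C := exists b, [/\ A != cf0L B + cf0L C,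
  pqL (A - cf0L C) n.+1 = Some b,
  (2 * (Dsum C - Dsum B) + 1 <= pdeg b)%N,
  pref (A - cf0L (rcons B b)) C &
  (A = cf0L (rcons B b) + cf0L C /\ stepL B C = Stop (rcons B b) C)].
Definition out_run n B C := exists b c, [/\ A != cf0L B + cf0L C,
  pqL (A - cf0L C) n.+1 = Some b,
  (2 * (Dsum C - Dsum B) + 1 <= pdeg b)%N,
  pref (A - cf0L (rcons B b)) C &
  [/\ (2 * (Dsum B + pdeg b - Dsum C) + 1 <= pdeg c)%N,
  RI n.+1 (rcons B b) (rcons C c),
  stepL B C = Run (rcons B b) (rcons C c) &
  exists2 b2 : {poly K}, (0 < pdeg b2)%N & hasdeg (A - cf0L (rcons B b) - cf0L C)
                  (- (2 * (Dsum B + pdeg b) + pdeg b2)%N%:Z)]].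

Lemma step_lemma n B C : RI n B C -> out_stop1 B C \/ out_stop2 n B C \/ out_run n B C.
Proof.
case=> sB sC pC pB DBC J E.
have alB := pref_alldeg pC; have alC := pref_alldeg pB.
have syC : small (A - cf0L C) by apply: smallB; [exact: sA|exact: cf0L_small].
have syB : small (A - cf0L B) by apply: smallB; [exact: sA|exact: cf0L_small].
rewrite /out_stop1 /out_stop2 /out_run.
have [h1|h1] := eqVneq A (cf0L B + cf0L C).
  by left; split => //; rewrite /stepL h1 eqxx.
right.
case eb: (pqL (A - cf0L C) n.+1) => [b|]; last first.
  exfalso; move: eb; rewrite -sB => eb.
  have := fwd_none syC pC eb => e; move/eqP: h1; apply.
  by rewrite -e; ring.
have hdb := fwd_some syC pC (etrans (congr1 (fun m => pqL _ m.+1) sB) eb).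
case ec1: (pqL (A - cf0L B) n.+1) => [c1|]; last first.
  exfalso; move: ec1; rewrite -sC => ec1.
  have := fwd_none syB pB ec1 => e; move/eqP: h1; apply.
  by rewrite -e; ring.
have hdc1 := fwd_some syB pB (etrans (congr1 (fun m => pqL _ m.+1) sC) ec1).
have dc1 := pqL_deg ec1.
have e1 : A - cf0L C - cf0L B = A - cf0L B - cf0L C by ring.
rewrite e1 in hdb.
have := hasdeg_uniq hdb hdc1 => hE.
have degb : (2 * (Dsum C - Dsum B) + 1 <= pdeg b)%N by lia.
set B' := rcons B b.
have pC' : pref (A - cf0L C) B' by apply: pref_rcons => //; rewrite sB.
have DB' : Dsum B' = (Dsum B + pdeg b)%N by rewrite /B' Dsum_rcons.
have hb1 := fwd_bnd syC pC'.
have alB' := pref_alldeg pC'.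
have syB' : small (A - cf0L B') by apply: smallB; [exact: sA|exact: cf0L_small].
have pB' : pref (A - cf0L B') C.
  apply: bwd => //.
  rewrite (_ : A - cf0L B' - cf0L C = A - cf0L C - cf0L B'); last by ring.
  apply: (lbnd_le hb1); rewrite DB'; lia.
have [h2|h2] := eqVneq A (cf0L B' + cf0L C).
  left; exists b; split => //; split => //.
  by rewrite /stepL (negbTE h1) sB eb -/B' h2 eqxx.
right.
case ec: (pqL (A - cf0L B') n.+1) => [c|]; last first.
  exfalso; move: ec; rewrite -sC => ec.
  have := fwd_none syB' pB' ec => e; move/eqP: h2; apply.
  by rewrite -e; ring.
have hdc := fwd_some syB' pB' (etrans (congr1 (fun m => pqL _ m.+1) sC) ec).
have sB' : size B' = n.+1 by rewrite /B' size_rcons sB.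
case eb2: (pqL (A - cf0L C) n.+2) => [b2|]; last first.
  exfalso; move: eb2; rewrite -sB' => eb2.
  have := fwd_none syC pC' eb2 => e; move/eqP: h2; apply.
  by rewrite -e; ring.
have hdb2 := fwd_some syC pC' (etrans (congr1 (fun m => pqL _ m.+1) sB') eb2).
have db2 := pqL_deg eb2.
have e2 : A - cf0L C - cf0L B' = A - cf0L B' - cf0L C by ring.
rewrite e2 in hdb2.
have := hasdeg_uniq hdb2 hdc => hE2.
rewrite DB' in hE2.
have degc : (2 * (Dsum B + pdeg b - Dsum C) + 1 <= pdeg c)%N by lia.
set C' := rcons C c.
have pB'' : pref (A - cf0L B') C' by apply: pref_rcons => //; rewrite sC.
have DC' : Dsum C' = (Dsum C + pdeg c)%N by rewrite /C' Dsum_rcons.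
have hc1 := fwd_bnd syB' pB''.
have pC'' : pref (A - cf0L C') B'.
  apply: bwd => //.
    by apply: smallB; [exact: sA|exact/cf0L_small/(pref_alldeg pB'')].
  rewrite (_ : A - cf0L C' - cf0L B' = A - cf0L B' - cf0L C'); last by ring.
  apply: (lbnd_le hc1); rewrite DB' DC'; lia.
exists b, c; split => //; split => //.
- split => //.
  + by rewrite /C' size_rcons sC.
  + by rewrite DB' DC'; lia.
  + by move=> _; rewrite /C' last_rcons DB' DC'; lia.
  + by rewrite DB' DC'; lia.
- by rewrite /stepL (negbTE h1) sB eb -/B' (negbTE h2) ec.
- by exists b2 => //; rewrite -DB'.
Qed.

End P8.

Section P9.
Variable K : fieldType.
Local Notation lau := (lau K).
Implicit Types x y z : lau.
Implicit Types (a b c : {poly K}) (B C : seq {poly K}).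
Variable A : lau.
Hypothesis ppA : pp A = 0.
Local Notation st n := (alg_state (lval A) n).

Lemma stS n : st n.+1 = alg_step (lval A) (st n). Proof. by []. Qed.

Lemma Gk k : (exists B C, st k = Run B C /\ RI A k B C) \/
  (exists j B C, [/\ (j < k)%N, st j = Run B C, RI A j B C,
      out_stop1 A B C \/ out_stop2 A j B C & st k = stepL A B C]).
Proof.
elim: k => [|k [[B [C [e r]]]|[j [B [C [jk ej rj os ek]]]]]].
- by left; exists [::], [::]; split => //; exact: RI0.
- rewrite stS e step_eq.
  case: (step_lemma ppA r) => [o|[o|[b [c [h1 h2 h3 h4 [h5 h6 h7 h8]]]]]].
  + by right; exists k, B, C; split => //; left.
  + by right; exists k, B, C; split => //; right.
  + by left; exists (rcons B b), (rcons C c); split.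
- right; exists j, B, C; split => //; first by apply: (ltn_trans jk).
  rewrite stS ek; case: os => [[_ ->]|[b [_ _ _ _ [_ ->]]]] //.
Qed.

Lemma no_fail k B C : st k <> Fail B C.
Proof.
case: (Gk k) => [[B0 [C0 [-> _]]] //|[j [B0 [C0 [_ _ _ os ->]]]]].
by case: os => [[_ ->]|[b [_ _ _ _ [_ ->]]]].
Qed.

Lemma run_RI k B C : st k = Run B C -> RI A k B C.
Proof.
case: (Gk k) => [[B0 [C0 [-> r]]] [<- <-] //|[j [B0 [C0 [_ _ _ os ->]]]]].
by case: os => [[_ ->]|[b [_ _ _ _ [_ ->]]]].
Qed.

Lemma run_succ k B C : st k.+1 = Run B C -> exists B0 C0 b c,
  [/\ st k = Run B0 C0, RI A k B0 C0, B = rcons B0 b, C = rcons C0 c &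
   [/\ (2 * (Dsum C0 - Dsum B0) + 1 <= pdeg b)%N,
       (2 * (Dsum B0 + pdeg b - Dsum C0) + 1 <= pdeg c)%N &
       exists2 b2 : {poly K}, (0 < pdeg b2)%N & hasdeg (A - cf0L (rcons B0 b) - cf0L C0)
                  (- (2 * (Dsum B0 + pdeg b) + pdeg b2)%N%:Z)]].
Proof.
move=> e.
case: (Gk k) => [[B0 [C0 [e0 r]]]|[j [B0 [C0 [_ _ _ os ek]]]]]; last first.
  move: e; rewrite stS ek; case: os => [[_ ->]|[b [_ _ _ _ [_ ->]]]] //.
move: e; rewrite stS e0 step_eq.
case: (step_lemma ppA r) => [[_ ->]|[[b [_ _ _ _ [_ ->]]]|[b [c [h1 h2 h3 h4 [h5 h6 h7 h8]]]]]] //.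
rewrite h7 => -[<- <-]; exists B0, C0, b, c; split => //.
Qed.

Lemma run_take k B C : st k = Run B C -> forall i, (i <= k)%N -> st i = Run (take i B) (take i C).
Proof.
elim: k B C => [|k IH] B C e i hi.
  have [sB sC _ _ _ _ _] := run_RI e.
  move: hi; rewrite leqn0 => /eqP ->; rewrite e.
  by move/size0nil: sB => ->; move/size0nil: sC => ->.
have [sB sC _ _ _ _ _] := run_RI e.
move: hi; rewrite leq_eqVlt => /orP[/eqP ->|hi].
  by rewrite !take_oversize ?sB ?sC.
have [B0 [C0 [b [c [e0 r0 -> -> _]]]]] := run_succ e.
have [sB0 sC0 _ _ _ _ _] := r0.
rewrite -!cats1 !takel_cat ?sB0 ?sC0 //; apply: IH => //.
Qed.

Lemma stop_stable k B C m : st k = Stop B C -> (k <= m)%N -> st m = Stop B C.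
Proof.
move=> e; elim: m => [|m IH]; first by rewrite leqn0 => /eqP <-.
rewrite leq_eqVlt => /orP[/eqP <-|]; first done.
by rewrite ltnS => /IH; rewrite stS => ->.
Qed.

End P9.

Section P10.
Variable K : fieldType.
Local Notation lau := (lau K).
Implicit Types x y z : lau.
Implicit Types (a b c : {poly K}) (B C : seq {poly K}).
Variable A : lau.
Hypothesis ppA : pp A = 0.
Local Notation st n := (alg_state (lval A) n).
Local Notation alpha := (lval A).

Lemma pq_tr X i : pq (lsub alpha (cf0 X)) i = pqL (A - cf0L X) i.
Proof. by rewrite cf0_val -lvalB pq_val. Qed.

Lemma algb_of_run k B C i : st k = Run B C -> (0 < i <= k)%N -> alg_b alpha i = Some (nth 0 B i.-1).
Proof.
move=> e /andP[i0 ik]; have ei := run_take ppA e ik.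
have [sB _ _ _ _ _ _] := run_RI ppA e.
rewrite /alg_b ei [st_b _]/= size_takel ?sB // i0 leqnn /=.
by rewrite nth_take // prednK.
Qed.

Lemma algc_of_run k B C i : st k = Run B C -> (0 < i <= k)%N -> alg_c alpha i = Some (nth 0 C i.-1).
Proof.
move=> e /andP[i0 ik]; have ei := run_take ppA e ik.
have [_ sC _ _ _ _ _] := run_RI ppA e.
rewrite /alg_c ei [st_c _]/= size_takel ?sC // i0 leqnn /=.
by rewrite nth_take // prednK.
Qed.

Lemma claim1c n b : (0 < n)%N -> alg_b alpha n = Some b ->
  forall i, (0 < i < n)%N -> alg_c alpha i = pq (lsub alpha (cf0 (alg_bs alpha n))) i.
Proof.
move=> n0 hb i /andP[i0 iN]; rewrite pq_tr.
case: (Gk ppA n) => [[B [C [e r]]]|[j [B0 [C0 [jn ej rj os en]]]]].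
  have [sB sC _ pB _ _ _] := r.
  rewrite (algc_of_run e (i := i)); last by apply/andP; split; lia.
  rewrite /alg_bs e /= take_oversize ?sB //.
  have hi1 : (i.-1 < size C)%N by rewrite sC; lia.
  by have := pB _ hi1; rewrite prednK.
case: os => [[_ eS]|[b' [_ _ _ pC' [_ eS]]]]; rewrite eS in en.
  move: hb; rewrite /alg_b en /=; have [sB _ _ _ _ _ _] := rj.
  by case: ifP => //; rewrite sB; lia.
have [sB sC _ _ _ _ _] := rj.
have nj : n = j.+1.
  move: hb; rewrite /alg_b en /= size_rcons sB; case: ifP => //; lia.
rewrite (algc_of_run ej (i := i)); last by apply/andP; split; lia.
rewrite /alg_bs en /= take_oversize ?size_rcons ?sB ?nj //.
have hi1 : (i.-1 < size C0)%N by rewrite sC; lia.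
by have := pC' _ hi1; rewrite prednK.
Qed.

Lemma claim1d n c : (0 < n)%N -> alg_c alpha n = Some c ->
  forall i, (0 < i <= n)%N ->
    alg_b alpha i = pq (lsub alpha (cf0 (alg_cs alpha n))) i /\
    alg_c alpha i = pq (lsub alpha (cf0 (alg_bs alpha n))) i.
Proof.
move=> n0 hc i hi; rewrite !pq_tr.
case: (Gk ppA n) => [[B [C [e r]]]|[j [B0 [C0 [jn ej rj os en]]]]]; last first.
  exfalso; move: hc; rewrite /alg_c en; have [_ sC _ _ _ _ _] := rj.
  by case: os => [[_ ->]|[b' [_ _ _ _ [_ ->]]]] /=; rewrite sC; case: ifP => //; lia.
have [sB sC pC pB _ _ _] := r.
rewrite (algc_of_run e hi) (algb_of_run e hi).
rewrite /alg_bs /alg_cs e /= !take_oversize ?sB ?sC //.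
case/andP: hi => i0 iN.
have hi1 : (i.-1 < size C)%N by rewrite sC; lia.
have hi2 : (i.-1 < size B)%N by rewrite sB; lia.
by have := pB _ hi1; have := pC _ hi2; rewrite !prednK.
Qed.

End P10.

Section P11.
Variable K : fieldType.
Local Notation lau := (lau K).
Implicit Types x y z : lau.
Implicit Types (a b c : {poly K}) (B C : seq {poly K}).
Variable A : lau.
Hypothesis ppA : pp A = 0.
Local Notation st n := (alg_state (lval A) n).
Local Notation alpha := (lval A).

Lemma algc_run n c : (0 < n)%N -> alg_c alpha n = Some c -> exists B C, st n = Run B C.
Proof.
move=> n0 hc.
case: (Gk ppA n) => [[B [C [e r]]]|[j [B0 [C0 [jn ej rj os en]]]]]; first by exists B, C.
exfalso; move: hc; rewrite /alg_c en; have [_ sC _ _ _ _ _] := rj.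
by case: os => [[_ ->]|[b' [_ _ _ _ [_ ->]]]] /=; rewrite sC; case: ifP => //; lia.
Qed.

Lemma nth_rcons_last B b : nth 0 (rcons B b) (size B) = b.
Proof. by rewrite nth_rcons ltnn eqxx. Qed.

Lemma claim2a b1 c1 : alg_b alpha 1 = Some b1 -> alg_c alpha 1 = Some c1 ->
  (2 * pdeg b1 + 1 <= pdeg c1)%N.
Proof.
move=> hb hc; have [B [C e]] := algc_run (n := 1) isT hc.
have [B0 [C0 [b [c [e0 r0 eB eC [h1 h2 _]]]]]] := run_succ ppA e.
have [sB0 sC0 _ _ _ _ _] := r0.
move/size0nil: sB0 => E1; move/size0nil: sC0 => E2; subst B0 C0.
move: hb hc; rewrite (algb_of_run ppA e (i := 1)) // (algc_of_run ppA e (i := 1)) // eB eC /=.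
by move=> [<-] [<-]; move: h1 h2; rewrite /Dsum /=; lia.
Qed.

Lemma claim2c n b c : (2 <= n)%N -> alg_b alpha n = Some b -> alg_c alpha n = Some c ->
  (pdeg b + 2 <= pdeg c)%N.
Proof.
move=> n2 hb hc; have [B [C e]] := algc_run (ltnW n2) hc.
case: n n2 e hb hc => // k _ e hb hc.
have [B0 [C0 [b' [c' [e0 r0 eB eC [h1 h2 _]]]]]] := run_succ ppA e.
have [sB0 sC0 _ _ D0 _ _] := r0.
move: hb hc; rewrite (algb_of_run ppA e (i := k.+1)) ?leqnn // (algc_of_run ppA e (i := k.+1)) ?leqnn //.
rewrite eB eC /= -{1}sB0 -sC0 !nth_rcons_last => -[<-] [<-].
lia.
Qed.

Lemma claim2b n b c : (2 <= n)%N -> alg_b alpha n = Some b -> alg_c alpha n.-1 = Some c ->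
  (pdeg c + 2 <= pdeg b)%N.
Proof.
move=> n2 hb hc.
case: n n2 hb hc => // k n2 hb hc; rewrite /= in hc.
have k0 : (0 < k)%N by lia.
case: (Gk ppA k.+1) => [[B [C [e r]]]|[j [B0 [C0 [jn ej rj os en]]]]].
  have [B0 [C0 [b' [c' [e0 r0 eB eC [h1 h2 _]]]]]] := run_succ ppA e.
  have [sB0 sC0 _ _ D0 J _] := r0.
  move: hb; rewrite (algb_of_run ppA e (i := k.+1)) ?leqnn // eB /= -sB0 nth_rcons_last => -[<-].
  move: hc; rewrite (algc_of_run ppA e0 (i := k)) ?leqnn ?k0 // -sC0 nth_last => -[<-].
  change (pdeg (last 0%R C0) + 2 <= pdeg b')%N; by have := J k0; lia.
have [sB0 sC0 _ _ D0 J _] := rj.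
case: os => [[_ eS]|[b' [_ _ h1 _ [_ eS]]]]; rewrite eS in en.
  by move: hb; rewrite /alg_b en /= sB0; case: ifP => //; lia.
have jk : j = k.
  by move: hb; rewrite /alg_b en /= size_rcons sB0; case: ifP => //; lia.
subst j; move: jk => sB0; rewrite sB0 in J sC0 ej.
move: hb; rewrite /alg_b en /= size_rcons sB0 ltnSn /= -sB0 nth_rcons_last => -[<-].
move: hc; rewrite (algc_of_run ppA ej (i := k)) ?leqnn ?k0 // -sC0 nth_last => -[<-].
change (pdeg (last 0%R C0) + 2 <= pdeg b')%N; by have := J k0; lia.
Qed.

End P11.

Section P12a.
Variable K : fieldType.
Local Notation lau := (lau K).
Implicit Types (a b c : {poly K}) (B C : seq {poly K}).

Lemma polyL_neq0 (q : {poly K}) : q != 0 -> polyL q != 0.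
Proof. by move=> qn0; apply/eqP => e; move/eqP: qn0; apply; apply: polyL_inj; rewrite e polyL0. Qed.

Lemma cf0L_rat bs : exists P Q : {poly K}, [/\ Q != 0, (size Q <= (Dsum bs).+1)%N,
  (size P <= (Dsum bs).+1)%N & cf0L bs = polyL P * (polyL Q)^-1].
Proof.
elim: bs => [|b bs [P [Q [Qn0 sQ sP e]]]].
  exists 0, 1; split => //; first by rewrite oner_eq0.
  - by rewrite size_poly1.
  - by rewrite size_poly0.
  - by rewrite polyL0 mul0r.
have hQ := polyL_neq0 Qn0.
have e1 : polyL b + cf0L bs = polyL (b * Q + P) * (polyL Q)^-1.
  rewrite e polyLD polyLM; field; exact: hQ.
have sb : (size b <= (pdeg b).+1)%N by rewrite /pdeg; lia.
have hs : (size (b * Q + P)%R <= (Dsum (b :: bs)).+1)%N.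
  apply: (leq_trans (size_polyD _ _)); rewrite geq_max; apply/andP; split.
    apply: (leq_trans (size_mul_leq _ _)).
    have ar : forall (x y d : nat), (y <= d.+1)%N -> ((x + y).-1 <= (x.-1 + d).+1)%N by move=> *; lia.
    exact: ar sQ.
  have ar : forall (x y d : nat), (x <= d.+1)%N -> (x <= (y.-1 + d).+1)%N by move=> *; lia.
  exact: ar sP.
have [z|nz] := eqVneq (b * Q + P) 0.
  exists 0, 1; split => //; first by rewrite oner_eq0.
  - by rewrite size_poly1.
  - by rewrite size_poly0.
  - by rewrite cf0L_cons e1 z !polyL0 !mul0r invr0.
exists Q, (b * Q + P); split => //.
  by apply: (leq_trans sQ); rewrite ltnS /Dsum /= leq_addl.
rewrite cf0L_cons e1 invfM invrK mulrC //.
Qed.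

End P12a.

Section P12.
Variable K : fieldType.
Local Notation lau := (lau K).
Implicit Types x y z : lau.
Implicit Types (a b c : {poly K}) (B C : seq {poly K}).
Variable A : lau.
Hypothesis ppA : pp A = 0.
Local Notation st n := (alg_state (lval A) n).
Local Notation alpha := (lval A).

Lemma rat_bound p q k B C : q != 0 -> A = polyL p * (polyL q)^-1 ->
  st k.+1 = Run B C -> (2 * k.+1 <= pdeg q)%N.
Proof.
move=> qn0 eA e.
have [B0 [C0 [b [c [e0 r0 eB eC [h1 h2 [b2 db2 hd]]]]]]] := run_succ ppA e.
have [sB0 sC0 _ _ D0 _ E0] := r0.
have [P1 [Q1 [Q1n0 sQ1 _ e1]]] := cf0L_rat (rcons B0 b).
have [P2 [Q2 [Q2n0 sQ2 _ e2]]] := cf0L_rat C0.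
set e' := A - cf0L (rcons B0 b) - cf0L C0 in hd.
have en0 := hasdeg_neq0 hd.
pose N := p * Q1 * Q2 - q * P1 * Q2 - q * Q1 * P2.
have hq := polyL_neq0 qn0; have h1' := polyL_neq0 Q1n0; have h2' := polyL_neq0 Q2n0.
have eN : e' * polyL (q * Q1 * Q2) = polyL N.
  rewrite /e' eA e1 e2 /N !polyLB !polyLM; field.
  by rewrite hq h1' h2'.
have Nn0 : N != 0.
  apply/eqP => Nz; move: eN; rewrite Nz polyL0 => /eqP; rewrite mulf_eq0 (negbTE en0) /=.
  by rewrite !polyLM !mulf_eq0 (negbTE hq) (negbTE h1') (negbTE h2').
have dq : hasdeg (polyL (q * Q1 * Q2)) (pdegz q + pdegz Q1 + pdegz Q2).
  by rewrite !polyLM; apply: degM; [apply: degM|]; apply: hasdeg_poly.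
have hN : hasdeg (e' * polyL (q * Q1 * Q2)) (pdegz N) by rewrite eN; exact: hasdeg_poly.
have := hasdeg_uniq (degM hd dq) hN.
rewrite Dsum_rcons in sQ1.
rewrite /pdegz /pdeg in sQ1 sQ2 *.
move=> H.
rewrite /pdeg in h1 db2.
lia.
Qed.

End P12.

Section P13.
Variable K : fieldType.
Local Notation lau := (lau K).
Implicit Types x y z : lau.
Implicit Types (a b c : {poly K}) (B C : seq {poly K}).
Variable A : lau.
Hypothesis ppA : pp A = 0.
Local Notation st n := (alg_state (lval A) n).
Local Notation alpha := (lval A).

Lemma lco_zero_diff x y N k : lbnd (x - y) N -> N < k -> lval x k = lval y k.
Proof.
move=> h lt; have := lbnd_lco h lt; rewrite lcoB => /eqP; rewrite subr_eq0 => /eqP.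
by [].
Qed.

Lemma stop_sum n B C : st n = Stop B C -> A = cf0L B + cf0L C.
Proof.
case: (Gk ppA n) => [[B0 [C0 [-> _]]] //|[j [B0 [C0 [_ _ _ os ->]]]]].
by case: os => [[h ->]|[b [_ _ _ _ [h ->]]]] [<- <-].
Qed.

Section Inf.
Hypothesis allrun : forall n, exists B C, st n = Run B C.

Lemma runB n : st n = Run (alg_bs alpha n) (alg_cs alpha n).
Proof.
have [B [C e]] := allrun n; have [sB sC _ _ _ _ _] := run_RI ppA e.
by rewrite /alg_bs /alg_cs e /= !take_oversize ?sB ?sC.
Qed.

Lemma riB n : RI A n (alg_bs alpha n) (alg_cs alpha n).
Proof. exact: (run_RI ppA (runB n)). Qed.

Lemma take_bs (a b : nat) : (a <= b)%N -> alg_bs alpha a = take a (alg_bs alpha b) /\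
                                alg_cs alpha a = take a (alg_cs alpha b).
Proof.
move=> ab; have := run_take ppA (runB b) ab; rewrite runB => -[-> ->]; done.
Qed.

Lemma stab_gen (f : nat -> seq {poly K}) (a b : nat) (k : int) :
  (forall n, alldeg (f n)) -> (forall n, size (f n) = n) ->
  (a <= b)%N -> f a = take a (f b) -> - (2 * a)%N%:Z <= k ->
  cf0 (f a) k = cf0 (f b) k.
Proof.
move=> ad sz ab ft hk; rewrite !cf0_val.
have pb := pref_cf0 (ad b).
have pa : pref (cf0L (f b)) (f a) by rewrite ft; apply: pref_take.
have := fwd_bnd (cf0L_small (ad b)) pa => h.
have Ds := Dsum_size (ad a); rewrite sz in Ds.
symmetry; apply: (lco_zero_diff h); lia.
Qed.

Lemma alldeg_bs n : alldeg (alg_bs alpha n).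
Proof. by have [_ _ pC _ _ _ _] := riB n; exact: pref_alldeg pC. Qed.
Lemma alldeg_cs n : alldeg (alg_cs alpha n).
Proof. by have [_ _ _ pB _ _ _] := riB n; exact: pref_alldeg pB. Qed.
Lemma size_bs n : size (alg_bs alpha n) = n.
Proof. by have [? _ _ _ _ _ _] := riB n. Qed.
Lemma size_cs n : size (alg_cs alpha n) = n.
Proof. by have [_ ? _ _ _ _ _] := riB n. Qed.

Lemma lconv_gen (f : nat -> seq {poly K}) :
  (forall n, alldeg (f n)) -> (forall n, size (f n) = n) ->
  (forall a0 b0 : nat, (a0 <= b0)%N -> f a0 = take a0 (f b0)) ->
  lconv (fun n => cf0 (f n)) (fun k => cf0 (f (absz k)) k).
Proof.
move=> ad sz ft m; exists (absz m) => n hn k hk /=.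
have [le|lt] := leqP n (absz k).
  apply: stab_gen => //; first exact: ft; lia.
symmetry; apply: stab_gen => //; [exact: ltnW|apply: ft; exact: ltnW|lia].
Qed.

Lemma inf_case : exists beta gamma, alg_result alpha beta gamma /\ alpha = ladd beta gamma.
Proof.
exists (fun k => cf0 (alg_bs alpha (absz k)) k), (fun k => cf0 (alg_cs alpha (absz k)) k).
split.
  right; split; first by move=> n; exists (alg_bs alpha n), (alg_cs alpha n); exact: runB.
  split; apply: lconv_gen.
  - exact: alldeg_bs.
  - exact: size_bs.
  - by move=> a0 b0 ab; case: (take_bs ab).
  - exact: alldeg_cs.
  - exact: size_cs.
  - by move=> a0 b0 ab; case: (take_bs ab).
apply: functional_extensionality => k; rewrite /ladd !cf0_val.
set N := absz k.
have [_ _ pC _ _ _ _] := riB N.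
have sy : small (A - cf0L (alg_cs alpha N)) by apply: smallB; [exact: sA|exact: cf0L_small (alldeg_cs N)].
have h := fwd_bnd sy pC.
have Ds := Dsum_size (alldeg_bs N); rewrite size_bs in Ds.
have := lco_zero_diff (x := A - cf0L (alg_cs alpha N)) h; rewrite /N => H.
rewrite -[LHS]/(lco A k).
have -> : lco A k = lco (A - cf0L (alg_cs alpha N)) k + lco (cf0L (alg_cs alpha N)) k.
  by rewrite lcoB subrK.
rewrite /lco H; [by []|move: Ds; rewrite /N; lia].
Qed.

End Inf.
End P13.

Definition is_run (K : fieldType) (s : alg_st K) := if s is Run _ _ then true else false.

Lemma cf0_ratfun (K : fieldType) (bs : seq {poly K}) : is_ratfun (cf0 bs).
Proof.
have [P [Q [Qn0 _ _ e]]] := cf0L_rat bs.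
by exists P, Q; split => //; rewrite cf0_val e.
Qed.

Theorem theorem4p3 (K : fieldType) (alpha : lseries K) :
  is_laurent alpha -> pq alpha 0 = Some 0 ->
  (* (1) *)
  ((forall n bs cs, alg_state alpha n <> Fail bs cs) /\
   (exists beta gamma, alg_result alpha beta gamma /\ alpha = ladd beta gamma) /\
   (forall (n : nat) (b : {poly K}), (0 < n)%N -> alg_b alpha n = Some b ->
      forall i : nat, (0 < i < n)%N ->
        alg_c alpha i = pq (lsub alpha (cf0 (alg_bs alpha n))) i) /\
   (forall (n : nat) (c : {poly K}), (0 < n)%N -> alg_c alpha n = Some c ->
      forall i : nat, (0 < i <= n)%N ->
        alg_b alpha i = pq (lsub alpha (cf0 (alg_cs alpha n))) i /\
        alg_c alpha i = pq (lsub alpha (cf0 (alg_bs alpha n))) i)) /\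
  (* (2) *)
  ((forall b1 c1, alg_b alpha 1 = Some b1 -> alg_c alpha 1 = Some c1 ->
      (2 * pdeg b1 + 1 <= pdeg c1)%N) /\
   (forall (n : nat) b c, (2 <= n)%N -> alg_b alpha n = Some b ->
      alg_c alpha n.-1 = Some c -> (pdeg c + 2 <= pdeg b)%N) /\
   (forall (n : nat) b c, (2 <= n)%N -> alg_b alpha n = Some b ->
      alg_c alpha n = Some c -> (pdeg b + 2 <= pdeg c)%N)) /\
  (* (3) *)
  (forall p q : {poly K}, q != 0 ->
     alpha = lmul (lpoly p) (linv (lpoly q)) ->
     (exists n : nat, (2 * n <= pdeg q)%N /\ is_stop (alg_state alpha n.+1)) /\
     (forall beta gamma, alg_result alpha beta gamma ->
        is_ratfun beta /\ is_ratfun gamma)).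
Proof.
move=> La h0.
pose A := Lau La.
have ppA : pp A = 0 by move: h0; rewrite (pq_val A 0) /pqL /= => -[].
change alpha with (lval A).
have part1b : exists beta gamma, alg_result (lval A) beta gamma /\ lval A = ladd beta gamma.
  case: (classic (exists n B C, alg_state (lval A) n = Stop B C)) => [[n [B [C e]]]|H].
    exists (cf0 B), (cf0 C); split; first by left; exists n, B, C.
    by rewrite !cf0_val -lvalD -(stop_sum ppA e).
  apply: (inf_case ppA) => n.
  case e: (alg_state (lval A) n) => [B C|B C|B C].
  - by exists B, C.
  - by exfalso; apply: H; exists n, B, C.
  - by exfalso; apply: (no_fail ppA e).
split; [split; [exact: no_fail ppA|split; [exact: part1b|split]]|split].
- exact: claim1c ppA.
- exact: claim1d ppA.
- split; [exact: claim2a ppA|split; [exact: claim2b ppA|exact: claim2c ppA]].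
move=> p q qn0 ea.
have eA : A = polyL p * (polyL q)^-1 by apply: lval_inj.
have part3 : exists n : nat, (2 * n <= pdeg q)%N /\ is_stop (alg_state (lval A) n.+1).
  have exP : exists m, ~~ is_run (alg_state (lval A) m).
    exists (pdeg q).+1; case e: (alg_state _ _) => [B C|//|//].
    by have := rat_bound ppA qn0 eA e; lia.
  case: (ex_minnP exP) => m hm hmin.
  case: m hm hmin => [|n] hm hmin; first by [].
  exists n; split.
    have : is_run (alg_state (lval A) n).
      by apply: contraT => /hmin; rewrite ltnn.
    case: n hm hmin => [|k] _ _; first by [].
    by case e: (alg_state _ _) => [B C|//|//] _; have := rat_bound ppA qn0 eA e; lia.
  move: hm; case e: (alg_state _ _) => [B C|B C|B C] //.
  by exfalso; apply: (no_fail ppA e).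
split => // beta gamma [[n [bs [cs [e [-> ->]]]]]|[allr _]]; first by split; apply: cf0_ratfun.
exfalso; case: part3 => n [_]; have [bs [cs e]] := allr n.+1; by rewrite e.
Qed.
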